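(* Let $(\mathfrak{g},[\cdot,\cdot]_{\mathfrak{g}},\phi_{\mathfrak{g}})$ be a finite-dimensional weakly involutive Hom-Lie algebra and let $r\in\mathfrak g\otimes\mathfrak g$ be skew-symmetric with $r^\sharp$ invertible. Define $B(x,y)=\langle(r^\sharp)^{-1}(x),y\rangle$. Then [$\phi_{\mathfrak g}r^\sharp=r^\sharp\phi_{\mathfrak g}^*$ and $r$ is a solution of the classical Hom-Yang-Baxter equation $[r,r]_{\mathfrak g}=0$] if and only if for all $x,y,z\in\mathfrak g$: $B(\phi_{\mathfrak g}(x),[y,z]_{\mathfrak g})+B(\phi_{\mathfrak g}(y),[z,x]_{\mathfrak g})+B(\phi_{\mathfrak g}(z),[x,y]_{\mathfrak g})=0$ and $B(\phi_{\mathfrak g}(x),y)=B(x,\phi_{\mathfrak g}(y))$.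
   Context: A Hom-Lie algebra $(\mathfrak{g},[\cdot,\cdot]_{\mathfrak{g}},\phi_{\mathfrak{g}})$: skew-symmetric bilinear bracket and linear map with $\phi_{\mathfrak g}[x,y]=[\phi_{\mathfrak g}x,\phi_{\mathfrak g}y]$ and $[\phi_{\mathfrak g}(x),[y,z]]+[\phi_{\mathfrak g}(y),[z,x]]+[\phi_{\mathfrak g}(z),[x,y]]=0$; weakly involutive if $[\phi_{\mathfrak g}^2(x),y]=[x,y]$. For $r\in\mathfrak g\otimes\mathfrak g$, $r^\sharp:\mathfrak g^*\to\mathfrak g$ is defined by $\langle r^\sharp(a),b\rangle=\langle r,a\otimes b\rangle$. For $r=\sum_ix_i\otimes y_i$, $[r,r]_{\mathfrak g}=\sum_{i,j}\big([x_i,x_j]_{\mathfrak g}\otimes\phi_{\mathfrak g}(y_i)\otimes\phi_{\mathfrak g}(y_j)+\phi_{\mathfrak g}(x_i)\otimes[y_i,x_j]_{\mathfrak g}\otimes\phi_{\mathfrak g}(y_j)+\phi_{\mathfrak g}(x_i)\otimes\phi_{\mathfrak g}(x_j)\otimes[y_i,y_j]_{\mathfrak g}\big)$. *)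

(* Defs.v *)
From HB Require Import structures.
From mathcomp Require Import all_boot all_order all_algebra.
Set Implicit Arguments. Unset Strict Implicit. Unset Printing Implicit Defensive.
Import GRing.Theory.
Local Open Scope ring_scope.

(* The finite-dimensional vector space g is modelled as 'rV[K]_n (row vectors,
   with standard basis delta_mx 0 i).  Its dual g^* is also modelled as
   'rV[K]_n via the canonical pairing <a, x> = \sum_i a_i x_i. *)

Section HomLie.
Variables (K : fieldType) (n : nat).
Local Notation V := 'rV[K]_n.

Definition pairing (a x : V) : K := \sum_(i < n) a 0 i * x 0 i.

Definition ebasis (i : 'I_n) : V := delta_mx 0 i.

Definition is_hom_lie (br : V -> V -> V) (phi : V -> V) : Prop :=
  [/\ (forall (a : K) (x y z : V), br (a *: x + y) z = a *: br x z + br y z),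
      (forall (a : K) (x y z : V), br x (a *: y + z) = a *: br x y + br x z),
      (forall x y : V, br x y = - br y x),
      (forall (a : K) (x y : V), phi (a *: x + y) = a *: phi x + phi y) &
      (forall x y : V, phi (br x y) = br (phi x) (phi y))]
  /\ (forall x y z : V,
          br (phi x) (br y z) + br (phi y) (br z x) + br (phi z) (br x y) = 0).
Definition weakly_involutive (br : V -> V -> V) (phi : V -> V) : Prop :=
  forall x y : V, br (phi (phi x)) y = br x y.

(* A tensor r \in g (x) g is given by its coefficient matrix:
   r = \sum_(i,j) r i j  e_i (x) e_j. *)
Definition skew_tensor (r : 'M[K]_n) : Prop := r^T = - r.

(* r^sharp : g^* -> g, <r^sharp a, b> = <r, a (x) b> = \sum r_ij a_i b_j *)
Definition rsharp (r : 'M[K]_n) (a : V) : V := a *m r.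

Definition dualmap (phi : V -> V) (a : V) : V :=
  \row_(j < n) pairing a (phi (ebasis j)).

(* [r, r]_g \in g (x) g (x) g, evaluated on a (x) b (x) c, using the
   decomposition r = \sum_(i,j) (r_ij e_i) (x) e_j. *)
Definition hom_cybe_eval (br : V -> V -> V) (phi : V -> V) (r : 'M[K]_n)
    (a b c : V) : K :=
  \sum_(i < n) \sum_(j < n) \sum_(k < n) \sum_(l < n)
    r i j * r k l *
    ( pairing a (br (ebasis i) (ebasis k)) * pairing b (phi (ebasis j))
        * pairing c (phi (ebasis l))
    + pairing a (phi (ebasis i)) * pairing b (br (ebasis j) (ebasis k))
        * pairing c (phi (ebasis l))
    + pairing a (phi (ebasis i)) * pairing b (phi (ebasis k))
        * pairing c (br (ebasis j) (ebasis l))).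

Definition hom_cybe (br : V -> V -> V) (phi : V -> V) (r : 'M[K]_n) : Prop :=
  forall a b c : V, hom_cybe_eval br phi r a b c = 0.

Definition hformB (r : 'M[K]_n) (x y : V) : K := pairing (x *m invmx r) y.

End HomLie.

(* Main.v *)
Require Import Defs.
From HB Require Import structures.
From mathcomp Require Import all_boot all_order all_algebra.
From mathcomp Require Import ring.
Import GRing.Theory.
Local Open Scope ring_scope.
Set Implicit Arguments. Unset Strict Implicit.

Section Aux.
Variables (K : fieldType) (n : nat).
Local Notation V := 'rV[K]_n.
Local Notation eb := (@ebasis K n).

Lemma pairingDr (a x y : V) : pairing a (x + y) = pairing a x + pairing a y.
Proof. by rewrite /pairing -big_split; apply eq_bigr => i _; rewrite mxE mulrDr. Qed.
Lemma pairingZr (a x : V) c : pairing a (c *: x) = c * pairing a x.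
Proof. by rewrite /pairing mulr_sumr; apply eq_bigr => i _; rewrite mxE mulrCA. Qed.
Lemma pairingC (a x : V) : pairing a x = pairing x a.
Proof. by rewrite /pairing; apply eq_bigr => i _; rewrite mulrC. Qed.
Lemma pairing0r (a : V) : pairing a 0 = 0.
Proof. by rewrite /pairing big1 // => i _; rewrite mxE mulr0. Qed.
Lemma pairing_sumr (a : V) (F : 'I_n -> V) :
  pairing a (\sum_(i < n) F i) = \sum_(i < n) pairing a (F i).
Proof. exact: (big_morph _ (pairingDr a) (pairing0r a)). Qed.
Lemma pairingNr (a x : V) : pairing a (- x) = - pairing a x.
Proof. by rewrite -scaleN1r pairingZr mulN1r. Qed.
Lemma pairingNl (a x : V) : pairing (- a) x = - pairing a x.
Proof. by rewrite pairingC pairingNr pairingC. Qed.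
Lemma pairing_e (a : V) (i : 'I_n) : pairing a (eb i) = a 0 i.
Proof.
rewrite /pairing (bigD1 i) //= big1 => [|j ji]; rewrite /ebasis mxE eqxx /=.
  by rewrite eqxx mulr1 addr0.
by rewrite (negbTE ji) mulr0.
Qed.
Lemma pairingE (a x : V) : pairing a x = (a *m x^T) 0 0.
Proof. by rewrite /pairing mxE; apply eq_bigr => i _; rewrite mxE. Qed.
Lemma pairing_mul (a x : V) (M : 'M[K]_n) : pairing a (x *m M) = pairing (a *m M^T) x.
Proof. by rewrite !pairingE trmx_mul mulmxA. Qed.

Variables (br : V -> V -> V) (phi : V -> V) (r : 'M[K]_n).
Hypothesis brL : forall (a : K) (x y z : V), br (a *: x + y) z = a *: br x z + br y z.
Hypothesis brR : forall (a : K) (x y z : V), br x (a *: y + z) = a *: br x y + br x z.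
Hypothesis phiL : forall (a : K) (x y : V), phi (a *: x + y) = a *: phi x + phi y.
Hypothesis rskew : r^T = - r.
Hypothesis runit : r \in unitmx.

Lemma phi0 : phi 0 = 0.
Proof.
have h := phiL 1 0 0; rewrite scale1r addr0 scale1r in h.
by apply: (addrI (phi 0)); rewrite addr0 -h.
Qed.
Lemma phiD x y : phi (x + y) = phi x + phi y.
Proof. by have := phiL 1 x y; rewrite !scale1r. Qed.
Lemma phiZ c x : phi (c *: x) = c *: phi x.
Proof. by have := phiL c x 0; rewrite phi0 !addr0. Qed.
Lemma phi_sum (F : 'I_n -> V) : phi (\sum_(i < n) F i) = \sum_(i < n) phi (F i).
Proof. exact: (big_morph _ phiD phi0). Qed.

Lemma br0l z : br 0 z = 0.
Proof.
have h := brL 1 0 0 z; rewrite scale1r addr0 scale1r in h.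
by apply: (addrI (br 0 z)); rewrite addr0 -h.
Qed.
Lemma brDl x y z : br (x + y) z = br x z + br y z.
Proof. by have := brL 1 x y z; rewrite !scale1r. Qed.
Lemma brZl c x z : br (c *: x) z = c *: br x z.
Proof. by have := brL c x 0 z; rewrite br0l !addr0. Qed.
Lemma br_suml (F : 'I_n -> V) z : br (\sum_(i < n) F i) z = \sum_(i < n) br (F i) z.
Proof. exact: (big_morph (br^~ z) (fun x y => brDl x y z) (br0l z)). Qed.
Lemma br0r z : br z 0 = 0.
Proof.
have h := brR 1 z 0 0; rewrite scale1r addr0 scale1r in h.
by apply: (addrI (br z 0)); rewrite addr0 -h.
Qed.
Lemma brDr x y z : br z (x + y) = br z x + br z y.
Proof. by have := brR 1 z x y; rewrite !scale1r. Qed.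
Lemma brZr c x z : br z (c *: x) = c *: br z x.
Proof. by have := brR c z x 0; rewrite br0r !addr0. Qed.
Lemma br_sumr (F : 'I_n -> V) z : br z (\sum_(i < n) F i) = \sum_(i < n) br z (F i).
Proof. exact: (big_morph (br z) (fun x y => brDr x y z) (br0r z)). Qed.

Lemma pairing_br (a u v : V) : pairing a (br u v) =
  \sum_(i < n) \sum_(k < n) pairing a (br (eb i) (eb k)) * u 0 i * v 0 k.
Proof.
rewrite {1}(row_sum_delta u) {1}(row_sum_delta v) br_suml pairing_sumr.
apply eq_bigr => i _; rewrite brZl br_sumr pairingZr pairing_sumr mulr_sumr.
apply eq_bigr => k _; rewrite brZr pairingZr /ebasis; ring.
Qed.

Lemma pairing_dual (a y : V) : pairing (dualmap phi a) y = pairing a (phi y).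
Proof.
rewrite [in RHS](row_sum_delta y) phi_sum pairing_sumr /pairing.
apply eq_bigr => j _; rewrite !mxE phiZ.
rewrite -/(pairing _ _) -/(pairing _ _) pairingZr mulrC /ebasis //.
Qed.

Lemma compat_to_sym :
  (forall a, phi (a *m r) = dualmap phi a *m r) ->
  forall x y, hformB r (phi x) y = hformB r x (phi y).
Proof.
move=> H x y; rewrite /hformB.
set a := x *m invmx r.
have hx : x = a *m r by rewrite /a -mulmxA mulVmx // mulmx1.
by rewrite {1}hx H -mulmxA mulmxV // mulmx1 pairing_dual.
Qed.

Lemma sym_to_compat :
  (forall x y, hformB r (phi x) y = hformB r x (phi y)) ->
  forall a, phi (a *m r) = dualmap phi a *m r.
Proof.
move=> H a.
suff <- : phi (a *m r) *m invmx r = dualmap phi a.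
  by rewrite -mulmxA mulVmx // mulmx1.
apply/rowP => j.
transitivity (pairing (phi (a *m r) *m invmx r) (eb j)); first by rewrite pairing_e.
have := H (a *m r) (eb j); rewrite /hformB => ->.
by rewrite -mulmxA mulmxV // mulmx1 mxE.
Qed.

Hypothesis H : forall a, phi (a *m r) = dualmap phi a *m r.

Lemma L1 (a : V) (i : 'I_n) :
  \sum_(j < n) r i j * pairing a (phi (eb j)) = - (phi (a *m r)) 0 i.
Proof.
have e : \sum_(j < n) r i j * pairing a (phi (eb j)) = pairing a (phi (eb i *m r)).
  rewrite [eb i *m r]row_sum_delta phi_sum pairing_sumr; apply eq_bigr => j _.
  by rewrite phiZ pairingZr /ebasis -rowE mxE.
by rewrite e H pairing_mul rskew mulmxN pairingNl pairingC pairing_dual pairingC pairing_e.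
Qed.

Lemma L2 (a : V) (i : 'I_n) :
  \sum_(j < n) r j i * pairing a (phi (eb j)) = (phi (a *m r)) 0 i.
Proof.
have rji : forall j, r j i = - r i j.
  move=> j; have h : r^T i j = (- r) i j by rewrite rskew.
  by rewrite !mxE in h.
under eq_bigr do rewrite rji mulNr.
by rewrite sumrN L1 opprK.
Qed.

Lemma R1 (F : 'I_n -> 'I_n -> K) (G Hf : 'I_n -> K) :
  \sum_(i < n) \sum_(j < n) \sum_(k < n) \sum_(l < n) r i j * r k l * (F i k * G j * Hf l)
  = \sum_(i < n) \sum_(k < n) F i k * (\sum_(j < n) r i j * G j) * (\sum_(l < n) r k l * Hf l).
Proof.
apply eq_bigr => i _; rewrite exchange_big; apply eq_bigr => k _ /=.
rewrite -[in RHS]mulrA mulr_suml mulr_sumr; apply eq_bigr => j _; rewrite !mulr_sumr.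
by apply eq_bigr => l _; ring.
Qed.
Lemma R2 (F : 'I_n -> 'I_n -> K) (G Hf : 'I_n -> K) :
  \sum_(i < n) \sum_(j < n) \sum_(k < n) \sum_(l < n) r i j * r k l * (G i * F j k * Hf l)
  = \sum_(j < n) \sum_(k < n) F j k * (\sum_(i < n) r i j * G i) * (\sum_(l < n) r k l * Hf l).
Proof.
rewrite exchange_big; apply eq_bigr => j _; rewrite exchange_big; apply eq_bigr => k _ /=.
rewrite -[in RHS]mulrA mulr_suml mulr_sumr; apply eq_bigr => i _; rewrite !mulr_sumr.
by apply eq_bigr => l _; ring.
Qed.
Lemma R3 (F : 'I_n -> 'I_n -> K) (G Hf : 'I_n -> K) :
  \sum_(i < n) \sum_(j < n) \sum_(k < n) \sum_(l < n) r i j * r k l * (G i * Hf k * F j l)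
  = \sum_(j < n) \sum_(l < n) F j l * (\sum_(i < n) r i j * G i) * (\sum_(k < n) r k l * Hf k).
Proof.
rewrite exchange_big; apply eq_bigr => j _.
under eq_bigr => i _ do rewrite exchange_big.
rewrite exchange_big; apply eq_bigr => l _ /=.
rewrite -[in RHS]mulrA mulr_suml mulr_sumr; apply eq_bigr => i _; rewrite !mulr_sumr.
by apply eq_bigr => k _; ring.
Qed.

Lemma cybe_expand (a b c : V) :
  hom_cybe_eval br phi r a b c =
    pairing a (br (phi (b *m r)) (phi (c *m r)))
  - pairing b (br (phi (a *m r)) (phi (c *m r)))
  + pairing c (br (phi (a *m r)) (phi (b *m r))).
Proof.
have T1 : \sum_(i < n) \sum_(j < n) \sum_(k < n) \sum_(l < n)
    r i j * r k l * (pairing a (br (eb i) (eb k)) * pairing b (phi (eb j))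
        * pairing c (phi (eb l))) = pairing a (br (phi (b *m r)) (phi (c *m r))).
  rewrite (R1 (fun i k => pairing a (br (eb i) (eb k))) (fun j => pairing b (phi (eb j)))
     (fun l => pairing c (phi (eb l)))) pairing_br.
  apply eq_bigr => i _; apply eq_bigr => k _; rewrite !L1; ring.
have T2 : \sum_(i < n) \sum_(j < n) \sum_(k < n) \sum_(l < n)
    r i j * r k l * (pairing a (phi (eb i)) * pairing b (br (eb j) (eb k))
        * pairing c (phi (eb l))) = - pairing b (br (phi (a *m r)) (phi (c *m r))).
  rewrite (R2 (fun i k => pairing b (br (eb i) (eb k))) (fun j => pairing a (phi (eb j)))
     (fun l => pairing c (phi (eb l)))) pairing_br -sumrN.
  apply eq_bigr => j _; rewrite -sumrN; apply eq_bigr => k _; rewrite L1 L2; ring.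
have T3 : \sum_(i < n) \sum_(j < n) \sum_(k < n) \sum_(l < n)
    r i j * r k l * (pairing a (phi (eb i)) * pairing b (phi (eb k))
        * pairing c (br (eb j) (eb l))) = pairing c (br (phi (a *m r)) (phi (b *m r))).
  rewrite (R3 (fun i k => pairing c (br (eb i) (eb k))) (fun j => pairing a (phi (eb j)))
     (fun l => pairing b (phi (eb l)))) pairing_br.
  apply eq_bigr => j _; apply eq_bigr => k _; rewrite !L2; ring.
rewrite -T1 -T2 -T3 /hom_cybe_eval -!big_split; apply eq_bigr => i _.
rewrite -!big_split; apply eq_bigr => j _.
rewrite -!big_split; apply eq_bigr => k _.
rewrite -!big_split; apply eq_bigr => l _ /=.
by rewrite !mulrDr.
Qed.

End Aux.

Theorem proposition4p11 (K : fieldType) (n : nat)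
    (br : 'rV[K]_n -> 'rV[K]_n -> 'rV[K]_n) (phi : 'rV[K]_n -> 'rV[K]_n)
    (r : 'M[K]_n) :
  [pchar K] =i pred0 ->
  is_hom_lie br phi ->
  weakly_involutive br phi ->
  skew_tensor r ->
  r \in unitmx ->
  ((forall a : 'rV[K]_n, phi (rsharp r a) = rsharp r (dualmap phi a))
     /\ hom_cybe br phi r)
  <->
  ((forall x y z : 'rV[K]_n,
      hformB r (phi x) (br y z) + hformB r (phi y) (br z x)
        + hformB r (phi z) (br x y) = 0)
   /\ (forall x y : 'rV[K]_n, hformB r (phi x) y = hformB r x (phi y))).
Proof.
move=> _ [[brL brR brS phiL phiM] _] _ rskew runit.
split.
- move=> [H Hc].
  have Hsym := compat_to_sym phiL runit H.
  split => // x y z.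
  rewrite !Hsym !phiM (brS (phi z) (phi x)) /hformB pairingNr.
  have h := Hc (x *m invmx r) (y *m invmx r) (z *m invmx r).
  by rewrite (cybe_expand brL brR phiL rskew H) !mulmxKV // in h.
- move=> [Hcyc Hsym].
  have H := sym_to_compat runit Hsym.
  split => // a b c.
  rewrite (cybe_expand brL brR phiL rskew H).
  have := Hcyc (a *m r) (b *m r) (c *m r).
  by rewrite !Hsym !phiM (brS (phi (c *m r))) /hformB !mulmxK // pairingNr.
Qed.
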